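(* Let $n$, $k$, $t$ be positive integers with $k\geq t+2$ and $n\geq 2k+1+\delta_{2,q}$. For positive integers $x$ define $$f(n,k,t,x)={x\brack t}{k-t+1\brack 1}^{x-t}{n-x\brack k-x}+{x\brack t}\sum_{i=0}^{x-t-1}{k-t+1\brack 1}^{i}.$$ Then $f(n,k,t,x)>f(n,k,t,x+1)$ for every $x\in\{t+1,\ldots,k-1\}$.
   Context: $q$ is a prime power and ${m\brack r}$ denotes the Gaussian binomial coefficient $\prod_{i=0}^{r-1}\frac{q^{m-i}-1}{q^{r-i}-1}$ (equal to $1$ for $r=0$). $\delta_{a,b}$ is the Kronecker delta. *)

(* Defs.v *)
From mathcomp Require Import all_boot all_order all_algebra.
Set Implicit Arguments. Unset Strict Implicit. Unset Printing Implicit Defensive.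
Import Order.TTheory GRing.Theory Num.Theory.
Local Open Scope ring_scope.

Definition prime_power (q : nat) : Prop :=
  exists p e : nat, [/\ prime p, (0 < e)%N & q = (p ^ e)%N].

(* Gaussian binomial [m brack r]_q = prod_{i=0}^{r-1} (q^{m-i}-1)/(q^{r-i}-1),
   computed in rat; equals 1 for r = 0.  (For m < r the factor i = m is 0.) *)
Definition qbin (q m r : nat) : rat :=
  \prod_(i < r) (((q%:R : rat) ^+ (m - i) - 1) / ((q%:R : rat) ^+ (r - i) - 1)).

Definition kdelta (a b : nat) : nat := if a == b then 1%N else 0%N.

Definition fval (q n k t x : nat) : rat :=
  qbin q x t * (qbin q (k - t + 1) 1) ^+ (x - t) * qbin q (n - x) (k - x)
  + qbin q x t * \sum_(i < x - t) (qbin q (k - t + 1) 1) ^+ i.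

(* Main.v *)
Require Import Defs.
From mathcomp Require Import all_boot all_order all_algebra.
From mathcomp Require Import ring lra zify.
Import Order.TTheory GRing.Theory Num.Theory.
Local Open Scope ring_scope.

Section H.
Variable q : nat.
Hypothesis q2 : (2 <= q)%N.
Let Q : rat := q%:R.

Lemma Q2 : 2 <= Q.
Proof. by rewrite /Q (ler_nat rat 2 q). Qed.

Lemma Xge1 n : 1 <= Q ^+ n.
Proof. apply: exprn_ege1; have := Q2; lra. Qed.

Lemma Xgt1 n : (0 < n)%N -> 1 < Q ^+ n.
Proof. move=> h; rewrite exprn_egt1; [lia | have := Q2; lra]. Qed.

Lemma Xmono a b : (a <= b)%N -> Q ^+ a <= Q ^+ b.
Proof.
move=> h; rewrite -(subnKC h) exprD.
have := Xge1 (b - a); have := Xge1 a; nra.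
Qed.

Lemma qbin_ge1 M R : (R <= M)%N -> 1 <= qbin q M R.
Proof.
move=> h; rewrite /qbin; apply: (big_ind (fun x => 1 <= x)) => //.
  by move=> x y; apply: mulr_ege1.
move=> i _; have hi := ltn_ord i.
have hp : 0 < Q ^+ (R - i) - 1 by have := Xgt1 (R - i) ltac:(lia); lra.
rewrite ler_pdivlMr // mul1r.
have := Xmono (R - i) (M - i) ltac:(lia); lra.
Qed.

Lemma qbin1 m : qbin q m 1 = (Q ^+ m - 1) / (Q - 1).
Proof. by rewrite /qbin big_ord1 subn0 expr1. Qed.

Lemma qbin_both M R : qbin q M.+1 R.+1 = (Q ^+ M.+1 - 1) / (Q ^+ R.+1 - 1) * qbin q M R.
Proof. by rewrite /qbin big_ord_recl /= !subn0. Qed.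

Lemma qbin_top m r : (r <= m)%N ->
  qbin q m.+1 r.+1 * (Q ^+ (m - r) - 1) = qbin q m r.+1 * (Q ^+ m.+1 - 1).
Proof.
move=> h; rewrite /qbin !prodf_div.
set D := \prod_(i < r.+1) ((q%:R : rat) ^+ (r.+1 - i) - 1).
rewrite big_ord_recl [X in _ = X / _ * _]big_ord_recr /= !subn0.
have -> : \prod_(i < r) ((q%:R : rat) ^+ (m.+1 - bump 0 i) - 1)
   = \prod_(i < r) ((q%:R:rat) ^+ (m - widen_ord (leqnSn r) i) - 1).
  by apply: eq_bigr => i _; rewrite /bump /= add1n subSS.
have -> : (m - r)%N = (m - @ord_max r)%N by [].
set P := \prod_(i < r) _.
rewrite /Q; ring.
Qed.

End H.
Arguments Q2 {q}. Arguments Xge1 {q}. Arguments Xgt1 {q}. Arguments Xmono {q}. Arguments qbin_ge1 {q}. Arguments qbin_top {q}.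
Lemma core3 (Q u v w Z : rat) : 3 <= Q -> Q <= u -> Q^+2 <= v -> Q^+3 <= w -> u*w <= Z ->
  (u*v-1)*(w+2*Q-3) <= Z*(v-1)*(Q-1).
Proof.
move=> hQ hu hv hw hZ.
have hQ2 : (9:rat) <= Q^+2 by rewrite expr2; nra.
have hQ3 : Q^+3 = Q * Q^+2 by rewrite exprS.
have hQ3b : (27:rat) <= Q^+3 by rewrite hQ3; nra.
have hQ5 : 0 <= Q^+2 * (Q^+3 - 4*Q + 3) by apply: mulr_ge0; nra.
have h0 : Q^+3 * (v-2) - v*(2*Q-3) >= 0.
  have : Q^+3 * (v-2) - v*(2*Q-3) = v*(Q^+3 - 2*Q+3) - 2 * Q^+3 by ring.
  move=> ->; have : v*(Q^+3 - 2*Q+3) >= Q^+2 *(Q^+3 - 2*Q+3) by apply: ler_wpM2r; nra.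
  have : Q^+2 * Q^+3 >= Q^+3 * 9 by rewrite mulrC; apply: ler_wpM2r; nra.
  nra.
have hv2 : 0 <= v - 2 by lra.
have h1 := ler_wpM2r hv2 hw.
have h2 : u * (w*(v-2) - v*(2*Q-3)) >= 0 by apply: mulr_ge0; nra.
have h3 : (u*v-1)*(w+2*Q-3) <= u*v*(w+2*Q-3) by nra.
have h4 : Z*((v-1)*(Q-1)) >= u*w*((v-1)*(Q-1)) by apply: ler_wpM2r; nra.
have hw0 : 0 <= w by lra.
have hu0 : 0 <= u by lra.
have hv1 : 0 <= v - 1 by lra.
have h5 := mulr_ge0 (mulr_ge0 hu0 hw0) hv1.
have hQ3' : 0 <= Q - 3 by lra.
have h6 := mulr_ge0 h5 hQ3'.
nra.
Qed.

Lemma core2 (u v w Z : rat) : 2 <= u -> 4 <= v -> 8 <= w -> 2*(u*w) <= Z ->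
  (u*v-1)*(w+2*2-3) <= Z*(v-1)*(2-1).
Proof.
move=> hu hv hw hZ.
have h2 : u * ((w-1)*(v-2) - 2) >= 0 by apply: mulr_ge0; nra.
have h4 : Z*(v-1) >= 2*(u*w)*(v-1) by apply: ler_wpM2r; nra.
nra.
Qed.

Lemma fin (P B r a rho S : rat) : P * B * (r * (a + 2)) <= P * B * rho ->
  P * r * 2 <= P * B * r * 2 -> 0 < r * (P - S) -> 0 <= S ->
  P*B*r*a + r*(S+P) < P*B*rho + S.
Proof. move=> h1 h2 h3 h4. nra. Qed.

Theorem lemma2p3 (q n k t : nat) :
  prime_power q -> (0 < n)%N -> (0 < k)%N -> (0 < t)%N ->
  (t + 2 <= k)%N -> (2 * k + 1 + kdelta 2 q <= n)%N ->
  forall x : nat, (t + 1 <= x)%N -> (x <= k - 1)%N ->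
    fval q n k t x > fval q n k t (x + 1).
Proof.
move=> hq n0 k0 t0 htk hn x hx1 hx2.
have q2 : (2 <= q)%N.
  move: hq; rewrite /prime_power => -[p [e [pp e0 qe]]]; rewrite qe.
  apply: leq_trans (prime_gt1 pp) _.
  case: e e0 {qe} => // e _; rewrite expnS leq_pmulr // expn_gt0 prime_gt0 //.
have e1 : (x + 1 - t = (x - t).+1)%N by lia.
have e2 : (t.-1 <= x)%N by lia.
have e3 : (x - t.-1 = x + 1 - t)%N by lia.
have e4 : ((n - x.+1).+1 = n - x)%N by lia.
have e5 : ((k - x.+1).+1 = k - x)%N by lia.
have hxt : (t <= x)%N by lia.
have hkn : (k - x.+1 <= n - x.+1)%N by lia.
have hxt1 : (0 < x + 1 - t)%N by lia.
have hxuvN : (t + (x + 1 - t) = x.+1)%N by lia.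
have hnxN : ((n - k) + (k - x) = n - x)%N by lia.
have t1 : (1 <= t)%N by lia.
have s2 : (2 <= x + 1 - t)%N by lia.
have m3 : (3 <= k - t + 1)%N by lia.
have kx1 : (1 <= k - x)%N by lia.
have hcase : (q = 2%N /\ (k + 2 <= n - k)%N /\ (k + 2)%N = (t + (k - t + 1)).+1) \/
             ((3 <= q)%N /\ (k + 1 <= n - k)%N /\ (k + 1)%N = (t + (k - t + 1))%N).
  by rewrite /kdelta in hn; case: eqP hn => ? ?; [left|right]; lia.
clear hn.
have QQ := Q2 q2.
set Q : rat := q%:R in QQ *.
rewrite /fval.
rewrite e1.
rewrite big_ord_recr exprSr /= addn1.
have hG' : qbin q x.+1 t = qbin q x t * ((Q^+x.+1-1)/(Q^+(x+1-t)-1)).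
  have := qbin_top x t.-1 e2.
  rewrite prednK // e3.
  move=> h; rewrite mulrA -h mulfK //.
  have := Xgt1 q2 (x + 1 - t) hxt1; rewrite -/Q; lra.
have hB := qbin_both q (n - x.+1) (k - x.+1).
rewrite e4 e5 in hB.
rewrite hG' hB.
have hG : 1 <= qbin q x t by apply: qbin_ge1.
have hBge : 1 <= qbin q (n - x.+1) (k - x.+1) by apply: qbin_ge1.
have ha := qbin1 q (k - t + 1).
set a := qbin q (k - t + 1) 1 in ha *.
set P := a ^+ (x - t).
set S := \sum_(i < x - t) a ^+ i.
set G := qbin q x t in hG *.
set B := qbin q (n - x.+1) (k - x.+1) in hBge *.
set u := Q ^+ t. set v := Q ^+ (x + 1 - t). set w := Q ^+ (k - t + 1).
set y := Q ^+ (k - x). set Z := Q ^+ (n - k).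
have hxuv : Q ^+ x.+1 = u * v by rewrite /u /v -exprD hxuvN.
have hnx : Q ^+ (n - x) = Z * y by rewrite /Z /y -exprD hnxN.
rewrite hxuv hnx.
have hZb : (Q = 2 /\ 2 * (u * w) <= Z) \/ (3 <= Q /\ u * w <= Z).
  case: hcase => [[q2e [hk ek]]|[q3 [hk ek]]].
    have QE : Q = 2 by rewrite /Q q2e.
    have hz := Xmono q2 _ _ hk.
    rewrite ek exprS exprD -/u -/w -/Z in hz.
    by left; split => //; rewrite -QE.
  have hz := Xmono q2 _ _ hk.
  rewrite ek exprD -/u -/w -/Z in hz.
  right; split => //.
  by rewrite /Q (ler_nat rat 3 q).
clear hcase e1 e3 e4 e5 hxuvN hnxN.
set r := (u * v - 1) / (v - 1).
set rho := (Z * y - 1) / (y - 1).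
have hu : Q <= u by rewrite /u -{1}(expr1 Q); apply: Xmono.
have hv : Q ^+ 2 <= v by apply: Xmono.
have hw : Q ^+ 3 <= w by apply: Xmono.
have hy : Q <= y by rewrite /y -{1}(expr1 Q); apply: Xmono.
have hZ1 : 1 <= Z by apply: Xge1.
have hQ2 : Q * 2 <= Q ^+ 2 by rewrite expr2; apply: ler_wpM2l; lra.
have hQ3 : Q ^+ 2 * 2 <= Q ^+ 3 by rewrite (exprS Q 2) mulrC; apply: ler_wpM2r; [rewrite expr2; nra | lra].
have hv1 : 0 < v - 1 by lra.
have hy1 : 0 < y - 1 by lra.
have hQ1 : 0 < Q - 1 by lra.
have hr : r * (v - 1) = u * v - 1 by rewrite /r mulfVK //; lra.
have hrho : rho * (y - 1) = Z * y - 1 by rewrite /rho mulfVK //; lra.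
have haw : a * (Q - 1) = w - 1 by rewrite ha mulfVK //; lra.
have hcore : (u*v-1)*(w+2*Q-3) <= Z*(v-1)*(Q-1).
  case: hZb => [[QE hz]|[q3 hz]].
    have u2 : 2 <= u by lra.
    have v4 : 4 <= v by lra.
    have w8 : 8 <= w by lra.
    rewrite QE; exact: core2.
  exact: core3.
have hra : r * (a + 2) <= Z.
  rewrite -(ler_pM2r (mulr_gt0 hv1 hQ1)).
  have -> : r * (a + 2) * ((v - 1) * (Q - 1)) = (r * (v-1)) * (a * (Q-1) + 2 * (Q - 1)) by ring.
  rewrite hr haw; lra.
have hrhoZ : Z <= rho.
  rewrite -(ler_pM2r hy1) hrho; lra.
have hr0 : 0 < r.
  have : 0 < u * v - 1 by nra.
  rewrite -hr => h; rewrite -(pmulr_lgt0 _ hv1) //.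
have hS : P - 1 = (a - 1) * S by rewrite /P /S subrX1.
have hS0 : 0 <= S.
  by apply: sumr_ge0 => i _; apply: exprn_ge0; have := haw; nra.
have ha3 : 3 <= a by nra.
have hP : 0 < P by apply: exprn_gt0; lra.
have hPS : 0 < P - S by nra.
have hG0 : 0 < G by lra.
rewrite -!mulrA -!mulrDr ltr_pM2l //.
have h1 : P * B * (r * (a + 2)) <= P * B * rho.
  apply: ler_wpM2l; [apply: mulr_ge0; lra | lra].
have h2 : P * r * 2 <= P * B * r * 2.
  have hPr : 0 <= P * r * 2 by apply: mulr_ge0; [apply: mulr_ge0|]; lra.
  have := ler_wpM2l hPr hBge; rewrite mulr1 => h.
  by rewrite (_ : P * B * r * 2 = P * r * 2 * B); [| ring].
have h3 : 0 < r * (P - S) by apply: mulr_gt0.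
have -> : (u*v-1) * ((v-1)^-1 * (P*(a*B) + (S+P))) = P*B*r*a + r*(S+P) by rewrite /r; ring.
have -> : P * ((Z*y-1) * ((y-1)^-1 * B)) + S = P*B*rho + S by rewrite /rho; ring.
exact: fin h1 h2 h3 hS0.
Qed.
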